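(* Let $f:\mathbb{R}^d\to\mathbb{R}^d$ be a homeomorphism with the forward topological shadowing property. Then $f$ satisfies the topological shadowing property.
   Context: $\mathbb{R}^d$ carries the Euclidean metric $d$; $\mathcal{C}^+=\{\epsilon:\mathbb{R}^d\to\mathbb{R}^+ : \epsilon \text{ continuous}\}$. For $\delta\in\mathcal{C}^+$, a sequence $\{x_n\}_{n\in\mathbb{Z}}$ is a $\delta$-pseudo-orbit of $f$ if $d(f(x_n),x_{n+1})<\delta(f(x_n))$ for every $n\in\mathbb{Z}$. The homeomorphism $f$ satisfies the topological shadowing property if for every $\epsilon\in\mathcal{C}^+$ there exists $\delta\in\mathcal{C}^+$ such that for every $\delta$-pseudo-orbit $\{x_n\}$ there is $y$ with $d(f^n(y),x_n)<\epsilon(x_n)$ for all $n\in\mathbb{Z}$. The homeomorphism $f$ satisfies the forward topological shadowing property if for every $\epsilon\in\mathcal{C}^+$ there exists $\delta\in\mathcal{C}^+$ such that for every $\delta$-pseudo-orbit $\{x_n\}_{n\in\mathbb{Z}}$ there exists $y\in\mathbb{R}^d$ with $d(f^n(y),x_n)\le\epsilon(x_n)$ for all $n\ge 0$. *)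

(* Defs.v *)
From Stdlib Require Fin.
From Stdlib Require Import Reals Lra ZArith.
Open Scope R_scope.

Definition Rd (d : nat) : Type := Fin.t d -> R.

Fixpoint fin_sum (d : nat) : (Fin.t d -> R) -> R :=
  match d return (Fin.t d -> R) -> R with
  | O => fun _ => 0
  | S n => fun g => g Fin.F1 + fin_sum n (fun i => g (Fin.FS i))
  end.

Definition dist {d : nat} (x y : Rd d) : R :=
  sqrt (fin_sum d (fun i => (x i - y i) ^ 2)).

Definition continuous_Rd {d : nat} (f : Rd d -> Rd d) : Prop :=
  forall x (e : R), 0 < e -> exists del, 0 < del /\
    forall y, dist x y < del -> dist (f x) (f y) < e.

Definition continuous_to_R {d : nat} (g : Rd d -> R) : Prop :=
  forall x (e : R), 0 < e -> exists del, 0 < del /\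
    forall y, dist x y < del -> Rabs (g x - g y) < e.

Definition homeomorphism {d : nat} (f : Rd d -> Rd d) : Prop :=
  exists g : Rd d -> Rd d,
    continuous_Rd f /\ continuous_Rd g /\
    (forall x, g (f x) = x) /\ (forall y, f (g y) = y).

Definition Cplus {d : nat} (eps : Rd d -> R) : Prop :=
  continuous_to_R eps /\ forall x, 0 < eps x.

Definition iter {d : nat} (f : Rd d -> Rd d) (n : nat) (x : Rd d) : Rd d :=
  Nat.iter n f x.

Definition zpow {d : nat} (f g : Rd d -> Rd d) (n : Z) (x : Rd d) : Rd d :=
  match n with
  | Z0 => x
  | Zpos p => iter f (Pos.to_nat p) x
  | Zneg p => iter g (Pos.to_nat p) x
  end.

Definition pseudo_orbit {d : nat} (f : Rd d -> Rd d) (delta : Rd d -> R)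
  (xs : Z -> Rd d) : Prop :=
  forall n : Z, dist (f (xs n)) (xs (n + 1)%Z) < delta (f (xs n)).

(* f^n(y) for n : Z, defined via any two-sided inverse g of f. *)
Definition topological_shadowing {d : nat} (f : Rd d -> Rd d) : Prop :=
  forall eps, Cplus eps -> exists delta, Cplus delta /\
    forall xs, pseudo_orbit f delta xs ->
      exists y, forall g : Rd d -> Rd d,
        (forall x, g (f x) = x) -> (forall x, f (g x) = x) ->
        forall n : Z, dist (zpow f g n y) (xs n) < eps (xs n).

Definition forward_topological_shadowing {d : nat} (f : Rd d -> Rd d) : Prop :=
  forall eps, Cplus eps -> exists delta, Cplus delta /\
    forall xs, pseudo_orbit f delta xs ->
      exists y, forall n : nat, dist (iter f n y) (xs (Z.of_nat n)) <= eps (xs (Z.of_nat n)).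

(* Main.v *)
Require Import Defs.
From Stdlib Require Fin.
From Stdlib Require Import Reals Lra Lia ZArith ClassicalEpsilon.
Require Import Defs.
Open Scope R_scope.

Lemma fin_sum_le : forall d (h k : Fin.t d -> R), (forall i, h i <= k i) -> fin_sum d h <= fin_sum d k.
Proof. induction d; intros h k H; simpl. lra. pose proof (H Fin.F1). pose proof (IHd (fun i => h (Fin.FS i)) (fun i => k (Fin.FS i)) (fun i => H (Fin.FS i))). lra. Qed.

Lemma fin_sum_nonneg : forall d (h : Fin.t d -> R), (forall i, 0 <= h i) -> 0 <= fin_sum d h.
Proof. induction d; intros h H; simpl. lra. pose proof (H Fin.F1). pose proof (IHd (fun i => h (Fin.FS i)) (fun i => H (Fin.FS i))). lra. Qed.

Lemma fin_sum_lin : forall d (h k : Fin.t d -> R) a b, fin_sum d (fun i => a * h i + b * k i) = a * fin_sum d h + b * fin_sum d k.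
Proof. induction d; intros h k a b; simpl. ring. rewrite (IHd (fun i => h (Fin.FS i)) (fun i => k (Fin.FS i))). ring. Qed.

Lemma fin_sum_term : forall d (h : Fin.t d -> R) i, (forall i, 0 <= h i) -> h i <= fin_sum d h.
Proof. induction d; intros h i H. destruct (Fin.case0 (fun _ => False) i).
  pattern i; apply Fin.caseS'; simpl.
  - pose proof (fin_sum_nonneg d (fun i => h (Fin.FS i)) (fun i => H (Fin.FS i))). lra.
  - intros p. pose proof (IHd (fun i => h (Fin.FS i)) p (fun i => H (Fin.FS i))). pose proof (H Fin.F1). simpl in *. lra.
Qed.

Lemma dist_nonneg : forall d (x y : Rd d), 0 <= dist x y.
Proof. intros; apply sqrt_pos. Qed.

Lemma dist_sq : forall d (x y : Rd d), dist x y ^ 2 = fin_sum d (fun i => (x i - y i) ^ 2).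
Proof. intros; unfold dist; apply pow2_sqrt. apply fin_sum_nonneg; intros; apply pow2_ge_0. Qed.

Lemma dist_weak_tri : forall d (a b c : Rd d), dist a c ^ 2 <= 2 * dist a b ^ 2 + 2 * dist b c ^ 2.
Proof. intros. rewrite !dist_sq. rewrite <- fin_sum_lin. apply fin_sum_le. intros i.
  pose proof (pow2_ge_0 (a i - 2 * b i + c i)). nra. Qed.

Lemma dist_coord : forall d (x y : Rd d) i, Rabs (x i - y i) <= dist x y.
Proof. intros. rewrite <- sqrt_Rsqr_abs. unfold dist. apply sqrt_le_1_alt.
  pose proof (fin_sum_term d (fun i => (x i - y i) ^ 2) i (fun i => pow2_ge_0 _)). simpl in *. unfold Rsqr. lra. Qed.

Lemma dist_lt : forall d (x y : Rd d) r, 0 < r -> fin_sum d (fun i => (x i - y i) ^ 2) < r ^ 2 -> dist x y < r.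
Proof. intros. unfold dist. rewrite <- (sqrt_pow2 r) by lra. apply sqrt_lt_1; auto.
  apply fin_sum_nonneg; intros; apply pow2_ge_0. apply pow2_ge_0. Qed.
Lemma incr_ge : forall (phi : nat -> nat), (forall k, (phi k < phi (S k))%nat) -> forall j, (j <= phi j)%nat.
Proof. intros phi H j; induction j. lia. specialize (H j); lia. Qed.

Lemma incr_le : forall (phi : nat -> nat), (forall k, (phi k < phi (S k))%nat) -> forall a b, (a <= b)%nat -> (phi a <= phi b)%nat.
Proof. intros phi H a b Hab; induction Hab. lia. specialize (H m); lia. Qed.

Lemma BW1 : forall (u : nat -> R) M, (forall k, Rabs (u k) <= M) ->
  exists (phi : nat -> nat) l, (forall k, (phi k < phi (S k))%nat) /\
    forall r, 0 < r -> exists J, forall j, (J <= j)%nat -> Rabs (u (phi j) - l) < r.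
Proof.
  intros u M HM.
  destruct (Bolzano_Weierstrass u (fun c => -M <= c <= M) (compact_P3 (-M) M)) as [l Hl].
  { intros n; specialize (HM n); pose proof (Rle_abs (u n)); pose proof (Rabs_Ropp (u n)); pose proof (Rle_abs (- u n)); lra. }
  assert (Hc : forall N k, {p | (N <= p)%nat /\ Rabs (u p - l) < / (INR k + 1)}).
  { intros N k. apply constructive_indefinite_description.
    assert (Hpos : 0 < / (INR k + 1)). { apply Rinv_0_lt_compat. pose proof (pos_INR k); lra. }
    destruct (Hl (fun y => Rabs (y - l) < / (INR k + 1)) N) as [p Hp].
    { exists (mkposreal _ Hpos). intros y Hy. exact Hy. }
    exists p; exact Hp. }
  set (phi := fun n => nat_rect (fun _ => nat) (proj1_sig (Hc 0%nat 0%nat))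
                        (fun k p => proj1_sig (Hc (S p) (S k))) n).
  assert (Hphi : forall k, Rabs (u (phi k) - l) < / (INR k + 1)).
  { intros [|k]; simpl. exact (proj2 (proj2_sig (Hc 0%nat 0%nat))).
    exact (proj2 (proj2_sig (Hc _ (S k)))). }
  exists phi, l; split.
  - intros k. change (phi (S k)) with (proj1_sig (Hc (S (phi k)) (S k))). pose proof (proj1 (proj2_sig (Hc (S (phi k)) (S k)))). lia.
  - intros r Hr. destruct (archimed_cor1 r Hr) as [J [HJ HJ0]]. exists J. intros j Hj.
    eapply Rlt_trans. apply Hphi. eapply Rle_lt_trans; [|exact HJ].
    apply Rinv_le_contravar. apply lt_0_INR; lia. apply le_INR in Hj. lra.
Qed.

Lemma BWd : forall d (z : nat -> Rd d) (M : Fin.t d -> R), (forall k i, Rabs (z k i) <= M i) ->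
  exists (phi : nat -> nat) (v : Rd d), (forall k, (phi k < phi (S k))%nat) /\
    forall i r, 0 < r -> exists J, forall j, (J <= j)%nat -> Rabs (z (phi j) i - v i) < r.
Proof.
  induction d; intros z M HM.
  - exists (fun k => k), (z 0%nat). split. intros; lia. intros i; destruct (Fin.case0 (fun _ => False) i).
  - destruct (IHd (fun k i => z k (Fin.FS i)) (fun i => M (Fin.FS i)) (fun k i => HM k (Fin.FS i)))
      as [phi1 [v1 [Hi1 Hc1]]].
    destruct (BW1 (fun k => z (phi1 k) Fin.F1) (M Fin.F1) (fun k => HM (phi1 k) Fin.F1))
      as [phi2 [l [Hi2 Hc2]]].
    exists (fun k => phi1 (phi2 k)), (fun i => Fin.caseS' i (fun _ => R) l (fun j => v1 j)).
    split.
    + intros k. pose proof (Hi1 (phi2 k)). pose proof (incr_le phi1 Hi1 (S (phi2 k)) (phi2 (S k)) (Hi2 k)). lia.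
    + intros i; pattern i; apply Fin.caseS'.
      * simpl. exact Hc2.
      * intros p r Hr. simpl. destruct (Hc1 p r Hr) as [J HJ]. exists J. intros j Hj.
        apply HJ. pose proof (incr_ge phi2 Hi2 j). lia.
Qed.

Lemma coord_conv : forall d (u : nat -> Rd d) (v : Rd d),
  (forall i r, 0 < r -> exists J, forall j, (J <= j)%nat -> Rabs (u j i - v i) < r) ->
  forall s, 0 < s -> exists J, forall j, (J <= j)%nat -> fin_sum d (fun i => (v i - u j i) ^ 2) < s.
Proof.
  induction d; intros u v H s Hs.
  - exists 0%nat; intros; simpl; lra.
  - destruct (IHd (fun j i => u j (Fin.FS i)) (fun i => v (Fin.FS i)) (fun i => H (Fin.FS i)) (s/2)) as [J1 HJ1]. lra.
    assert (Hq : 0 < sqrt (s/2)) by (apply sqrt_lt_R0; lra).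
    destruct (H Fin.F1 _ Hq) as [J2 HJ2].
    exists (Nat.max J1 J2). intros j Hj. simpl.
    specialize (HJ1 j ltac:(lia)). specialize (HJ2 j ltac:(lia)). simpl in HJ1.
    rewrite Rabs_minus_sym in HJ2.
    pose proof (pow2_abs (v Fin.F1 - u j Fin.F1)). pose proof (Rabs_pos (v Fin.F1 - u j Fin.F1)).
    pose proof (pow2_sqrt (s/2) ltac:(lra)). nra.
Qed.

Lemma cont_comp : forall d (F G : Rd d -> Rd d), continuous_Rd F -> continuous_Rd G ->
  continuous_Rd (fun x => F (G x)).
Proof. intros d F G HF HG x e He. destruct (HF (G x) e He) as [d1 [Hd1 H1]].
  destruct (HG x d1 Hd1) as [d2 [Hd2 H2]]. exists d2; split; auto. Qed.

Lemma cont_iter : forall d (f : Rd d -> Rd d), continuous_Rd f -> forall n, continuous_Rd (iter f n).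
Proof. intros d f Hf n; induction n.
  - intros x e He; exists e; split; auto.
  - unfold iter in *; simpl. apply cont_comp; auto. Qed.

Lemma cont_zpow : forall d (f g : Rd d -> Rd d), continuous_Rd f -> continuous_Rd g ->
  forall n, continuous_Rd (zpow f g n).
Proof. intros d f g Hf Hg [|p|p]; simpl.
  - intros x e He; exists e; split; auto.
  - apply cont_iter; auto.
  - apply cont_iter; auto. Qed.

Lemma iter_add' : forall d (f : Rd d -> Rd d) a b y, iter f (a + b) y = iter f a (iter f b y).
Proof. intros; unfold iter; apply Nat.iter_add. Qed.

Lemma iter_cancel : forall d (f g : Rd d -> Rd d), (forall x, g (f x) = x) ->
  forall p x, iter g p (iter f p x) = x.
Proof. intros d f g H p; induction p; intros x. reflexivity.
  unfold iter in *. rewrite (Nat.iter_succ_r p _ f x). simpl. rewrite IHp. apply H. Qed.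

Lemma zpow_shift : forall d (f g : Rd d -> Rd d), (forall x, g (f x) = x) ->
  forall (n : Z) (k m : nat) y, n = (Z.of_nat m - Z.of_nat k)%Z ->
  zpow f g n (iter f k y) = iter f m y.
Proof. intros d f g H n k m y Hn. destruct n as [|p|p]; simpl.
  - assert (m = k) by lia. subst; reflexivity.
  - assert (m = (Pos.to_nat p + k)%nat) by lia. subst. rewrite iter_add'. reflexivity.
  - assert (k = (Pos.to_nat p + m)%nat) by lia. subst. rewrite iter_add'. apply iter_cancel; auto.
Qed.

Theorem mainTheorem6 (d : nat) (f : Rd d -> Rd d) :
  homeomorphism f -> forward_topological_shadowing f -> topological_shadowing f.
Proof.
  intros [g0 [Hf [Hg0 [Hgf Hfg]]]] Hfw eps [Hec Hep].
  set (eps2 := fun x => eps x / 2).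
  assert (Hc2 : Cplus eps2).
  { split.
    - intros x e He. destruct (Hec x e He) as [del [Hd H]]. exists del; split; auto.
      intros y Hy. specialize (H y Hy). apply Rabs_def2 in H. unfold eps2. apply Rabs_def1; lra.
    - intros x; unfold eps2; specialize (Hep x); lra. }
  destruct (Hfw eps2 Hc2) as [delta [Hdc Hsh]].
  exists delta; split; [exact Hdc|]. intros xs Hpo.
  assert (HX : forall k : nat, {y | forall m : nat,
     dist (iter f m y) (xs (Z.of_nat m - Z.of_nat k)%Z) <= eps2 (xs (Z.of_nat m - Z.of_nat k)%Z)}).
  { intros k. apply constructive_indefinite_description.
    apply (Hsh (fun n => xs (n - Z.of_nat k)%Z)).
    intros n. simpl. replace (n + 1 - Z.of_nat k)%Z with ((n - Z.of_nat k) + 1)%Z by ring. apply Hpo. }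
  set (Zs := fun k => iter f k (proj1_sig (HX k))).
  assert (Key : forall g, (forall x, g (f x) = x) -> forall k n, (- Z.of_nat k <= n)%Z ->
            dist (zpow f g n (Zs k)) (xs n) <= eps2 (xs n)).
  { intros g Hg k n Hkn. set (m := Z.to_nat (n + Z.of_nat k)).
    unfold Zs. rewrite (zpow_shift d f g Hg n k m) by lia.
    pose proof (proj2_sig (HX k) m) as Hm. simpl in Hm.
    replace (Z.of_nat m - Z.of_nat k)%Z with n in Hm by lia. exact Hm. }
  assert (Hb : forall k i, Rabs (Zs k i) <= Rabs (xs 0%Z i) + eps2 (xs 0%Z)).
  { intros k i. pose proof (Key g0 Hgf k 0%Z ltac:(lia)) as H0. simpl in H0.
    pose proof (dist_coord d (Zs k) (xs 0%Z) i).
    pose proof (Rabs_triang (Zs k i - xs 0%Z i) (xs 0%Z i)).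
    replace (Zs k i - xs 0%Z i + xs 0%Z i) with (Zs k i) in * by ring. lra. }
  destruct (BWd d Zs _ Hb) as [phi [v [Hphi Hconv]]].
  pose proof (coord_conv d (fun j => Zs (phi j)) v Hconv) as Hsum.
  exists v. intros g Hgf' Hfg' n.
  assert (Hgeq : forall x, g x = g0 x).
  { intros x. rewrite <- (Hfg x) at 1. apply Hgf'. }
  assert (Hgc : continuous_Rd g).
  { intros x e He. destruct (Hg0 x e He) as [del [Hd H]]. exists del; split; auto.
    intros y Hy. rewrite !Hgeq. auto. }
  pose proof (cont_zpow d f g Hf Hgc n) as HF.
  set (e := eps (xs n)). assert (He : 0 < e) by apply Hep.
  destruct (HF v (e/4) ltac:(lra)) as [r' [Hr' HF']].
  destruct (Hsum (r' ^ 2) ltac:(nra)) as [J HJ].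
  set (j := Nat.max J (Z.to_nat (Z.abs n))).
  specialize (HJ j ltac:(lia)).
  pose proof (incr_ge phi Hphi j) as Hj.
  assert (Hd1 : dist v (Zs (phi j)) < r') by (apply dist_lt; auto).
  specialize (HF' _ Hd1).
  pose proof (Key g Hgf' (phi j) n ltac:(lia)) as Hd2. unfold eps2 in Hd2. fold e in Hd2.
  pose proof (dist_weak_tri d (zpow f g n v) (zpow f g n (Zs (phi j))) (xs n)).
  pose proof (dist_nonneg d (zpow f g n v) (xs n)).
  pose proof (dist_nonneg d (zpow f g n v) (zpow f g n (Zs (phi j)))).
  pose proof (dist_nonneg d (zpow f g n (Zs (phi j))) (xs n)).
  fold e. nra.
Qed.
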